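(* Let $(S,+)$ be a semigroup with no idempotent element and of cardinality $\kappa>\omega$. Let $\mu$ be a cardinal with $\omega<\mu\le\kappa$ such that there is a family of $\lambda$ almost disjoint subsets of $\mu$, and let $A\subseteq S$ be an IP set with $|A|=\mu$. Then $A$ contains a family of $\lambda$ almost disjoint subsets each of which is an IP set.
   Context: For an infinite set $X$, a family $\mathcal{A}$ is a family of almost disjoint subsets of $X$ if each $B\in\mathcal{A}$ satisfies $B\subseteq X$ and $|B|=|X|$, and for distinct $B,C\in\mathcal{A}$, $|B\cap C|<|X|$. $e$ is idempotent if $e+e=e$. $A\subseteq S$ is an IP set if there is a sequence $\langle x_n\rangle_{n=1}^\infty$ in $S$ with all finite sums $\sum_{n\in H}x_n$ (increasing order, $H$ a nonempty finite subset of $\mathbb{N}$) in $A$. *)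

(* Defs.v *)
From mathcomp Require Import all_boot.
From mathcomp Require Import boolp classical_sets cardinality.
Set Implicit Arguments. Unset Strict Implicit. Unset Printing Implicit Defensive.
Local Open Scope classical_set_scope.
Local Open Scope card_scope.

Fixpoint fsum (S : Type) (add : S -> S -> S) (x : nat -> S) (h : nat)
    (t : seq nat) : S :=
  match t with
  | [::] => x h
  | h' :: t' => add (x h) (fsum add x h' t')
  end.

(* A nonempty finite H subset of nat is represented by its strictly increasing
   enumeration h :: t. *)
Definition IP_set (S : Type) (add : S -> S -> S) (A : set S) : Prop :=
  exists x : nat -> S,
    forall (h : nat) (t : seq nat), sorted ltn (h :: t) -> A (fsum add x h t).

Definition almost_disjoint_family (T I : Type) (X : set T) (F : I -> set T) :
    Prop :=
  injective F /\
  (forall i, F i `<=` X /\ F i #= X) /\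
  (forall i j, i <> j -> F i `&` F j #<= X /\ ~ (X #<= F i `&` F j)).

(* Main.v *)
Require Import Defs.
From mathcomp Require Import all_boot.
From mathcomp Require Import boolp classical_sets functions cardinality.
From mathcomp Require Import zify.
Local Open Scope classical_set_scope.
Local Open Scope card_scope.

Lemma card_leE {T U} (u : U) (A : set T) (B : set U) :
  A #<= B <-> exists f : T -> U, {in A &, injective f} /\ (forall x, A x -> B (f x)).
Proof.
elim/Ppointed: U => U in u B *.
  by have := no u.
split.
  move/pcard_leP => [f]; exists f; split; [exact: inj | exact: funS].
move=> [f [fi fs]]; apply/pcard_leP; apply/injfunPex; exists f => //.
Qed.

Lemma countableU {T} {C1 C2 : set T} : countable C1 -> countable C2 -> countable (C1 `|` C2).
Proof.
move=> /(card_leE 0%N) [f1 [i1 _]] /(card_leE 0%N) [f2 [i2 _]].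
apply/(card_leE 0%N).
exists (fun x => if x \in C1 then 2 * f1 x else (2 * f2 x).+1); split => //.
move=> x y; rewrite !in_setE => xC yC.
case: ifPn => hx; case: ifPn => hy E.
- by apply: i1 => //; lia.
- lia.
- lia.
- apply: i2; last lia; rewrite in_setE.
    by case: xC => // /mem_set; rewrite (negbTE hx).
  by case: yC => // /mem_set; rewrite (negbTE hy).
Qed.

Lemma uncount_setD {T} {X K : set T} : ~ countable X -> countable K -> X #<= X `\` K.
Proof.
move=> Xu Kc.
have Einf : infinite_set (X `\` K).
  move=> /finite_set_countable Ec; apply: Xu.
  refine (@sub_countable _ _ X (X `\` K `|` K) _ (countableU Ec Kc)). apply: subset_card_le => x Xx.
  by case: (pselect (K x)) => ?; [right|left].
have [t Xt] : exists t, X t.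
  apply: contrapT => nX; apply: Xu; suff -> : X = set0 by [].
  by apply/seteqP; split => x // Xx; apply: nX; exists x.
move/infiniteP: Einf => /(card_leE t) [e [ei eE]].
have ei' : injective e by move=> a b; apply: ei; exact: mem_set.
move/(card_leE 0%N): Kc => [k [ki _]].
pose inv x := xget 0%N [set n | e n = x].
have invE x : range e x -> e (inv x) = x.
  by move=> [n _ <-]; exact: (@xgetI _ 0%N [set m | e m = e n] n erefl).
pose f x := if x \in K then e (2 * k x).+1 else if x \in range e then e (2 * inv x) else x.
apply/(card_leE t); exists f; split; last first.
  move=> x Xx; rewrite /f; case: ifPn => hK; first exact: eE.
  case: ifPn => hr; first exact: eE.
  by split => //; move: hK; rewrite notin_setE.
move=> x y; rewrite !in_setE => Xx Xy; rewrite /f.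
have [hxK|hxK] := boolP (x \in K); have [hyK|hyK] := boolP (y \in K);
  rewrite ?hxK ?hyK ?(negbTE hxK) ?(negbTE hyK).
- move/ei' => H; apply: ki => //; lia.
- case: ifPn => hyr; first by move/ei'; lia.
  by move=> E; move: hyr; rewrite -E (mem_set (imageT _ _)).
- case: ifPn => hxr; first by move/ei'; lia.
  by move=> E; move: hxr; rewrite E (mem_set (imageT _ _)).
- have [hxr|hxr] := boolP (x \in range e); have [hyr|hyr] := boolP (y \in range e);
    rewrite ?hxr ?hyr ?(negbTE hxr) ?(negbTE hyr).
  + move/ei' => H; rewrite -(invE x (set_mem hxr)) -(invE y (set_mem hyr)).
    by congr e; lia.
  + by move=> E; move: hyr; rewrite -E (mem_set (imageT _ _)).
  + by move=> E; move: hxr; rewrite E (mem_set (imageT _ _)).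
  + by [].
Qed.

Lemma uncount_nonempty {T} {X : set T} : ~ countable X -> exists t, X t.
Proof.
move=> Xu; apply: contrapT => nX; apply: Xu; suff -> : X = set0 by [].
by apply/seteqP; split => x // Xx; apply: nX; exists x.
Qed.

Lemma absorb_countable {T U} {X : set T} {Y C : set U} :
  ~ countable X -> countable C -> X #<= Y `|` C -> X #<= Y.
Proof.
move=> Xu Cc; have [t Xt] := uncount_nonempty Xu.
elim/Ppointed: U => U in Y C Cc *.
  by rewrite emptyE => /eqP X0; rewrite X0 in Xt.
move/(card_leE point) => [g [gi gE]].
pose K := X `&` (g @^-1` C).
have Kc : countable K.
  apply: (@card_le_trans _ _ _ C) Cc.
  apply/(card_leE point); exists g; split; last by move=> x [].
  by move=> x y; rewrite !in_setE => -[Xx _] [Xy _]; apply: gi; rewrite in_setE.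
apply: (card_le_trans (uncount_setD Xu Kc)).
apply/(card_leE point); exists g; split.
  by move=> x y; rewrite !in_setE => -[Xx _] [Xy _]; apply: gi; rewrite in_setE.
move=> x [Xx nK]; case: (gE x Xx) => // Cg.
by exfalso; apply: nK; split.
Qed.

Theorem theorem2p8 (S : Type) (add : S -> S -> S)
  (add_assoc : associative add)
  (no_idem : forall e : S, add e e <> e)
  (S_uncountable : ~ countable [set: S])
  (M L : Type)
  (M_uncountable : ~ countable [set: M])
  (M_le_S : [set: M] #<= [set: S])
  (F : L -> set M)
  (F_ad : almost_disjoint_family [set: M] F)
  (A : set S)
  (A_IP : IP_set add A)
  (A_card : A #= [set: M]) :
  exists G : L -> set S,
    almost_disjoint_family A G /\ (forall l, IP_set add (G l)).
Proof.
move: A_IP => [x Hx].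
pose FS := [set s | exists h t, sorted ltn (h :: t) /\ s = fsum add x h t].
have FSA : FS `<=` A by move=> s [h [t [st ->]]]; exact: Hx.
have FSc : countable FS.
  apply: (@card_le_trans _ _ _ ((fun p : nat * seq nat => fsum add x p.1 p.2) @` [set: nat * seq nat])).
    by apply: subset_card_le => s [h [t [_ ->]]]; exists (h, t).
  apply: (card_le_trans (card_image_le _ _)); exact: countableP.
move: A_card; rewrite card_eq_le => /andP[AM MA]. have MA' := MA.
move/(card_leE (x 0%N)): MA => [hM [hMi hMA]].
move: F_ad => [Finj [Fsub Fdisj]].
pose G l := FS `|` hM @` F l.
have G_sub l : G l `<=` A by move=> s [/FSA //|[m _ <-]]; exact: hMA.
have G_ge l : A #<= G l.
  apply: (card_le_trans AM).
  have MF : [set: M] #<= F l by have [_] := Fsub l; rewrite card_eq_le => /andP[].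
  apply: (card_le_trans MF).
  have : hM @` F l #= F l.
    by apply: inj_card_eq => a b _ _; apply: hMi; rewrite in_setE.
  rewrite card_eq_sym card_eq_le => /andP[+ _] => le1.
  apply: (card_le_trans le1); apply: subset_card_le => s Hs; by right.
have G_int i j : i <> j -> ~ (A #<= G i `&` G j).
  move=> ne le; have [_ D2] := Fdisj i j ne; apply: D2.
  have MU : [set: M] #<= hM @` (F i `&` F j) `|` FS.
    apply: (card_le_trans MA'); apply: (card_le_trans le); apply: subset_card_le.
    move=> s [[FSs|[a Fia <-]] [FSs'|[b Fjb E]]]; try by right.
    left; exists a => //; split => //; rewrite -(hMi _ _ _ _ E) ?in_setE //.
  have := absorb_countable M_uncountable FSc MU.
  by move=> /card_le_trans; apply; exact: card_image_le.
exists G; split; last first.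
  by move=> l; exists x => h t st; left; exists h, t.
split.
  move=> i j E; apply: contrapT => ne; apply: (G_int i j ne).
  by rewrite E setIid.
split.
  move=> l; split; first exact: G_sub.
  by rewrite card_eq_le; apply/andP; split; [exact: subset_card_le|].
move=> i j ne; split; last exact: G_int.
by apply: subset_card_le => s [/G_sub].
Qed.
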